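(* Under the standing assumptions, suppose in addition that $g$ is e-convex. Then the following are equivalent: (i) strong duality holds for $(P)-(D^F)$; (ii) strong duality holds for $(P)-(\bar D^F)$ and $\Omega\cap B=K\cap B$.
   Context: Let $X$ be a nontrivial separated locally convex space with topological dual $X^*$, endowed with the topology $\sigma(X,X^* )$; $\langle x,x^*\rangle$ is the value of $x^*\in X^*$ at $x\in X$. Put $W:=X^*\times X^*\times\mathbb{R}$, $\mathbb{R}_{++}:=]0,+\infty[$ and $Z:=X^*\times X^*\times\mathbb{R}_{++}$. For $y^*\in X^*$, $\alpha\in\mathbb{R}$, let $H^-_{y^*,\alpha}:=\{x\in X:\langle x,y^*\rangle<\alpha\}$. The coupling function $c:X\times W\to\overline{\mathbb{R}}$ is $c(x,(x^*,y^*,\alpha)):=\langle x,x^*\rangle$ if $\langle x,y^*\rangle<\alpha$ and $:=+\infty$ otherwise. For $h:X\to\overline{\mathbb{R}}$ its $c$-conjugate is $h^c:W\to\overline{\mathbb{R}}$, $h^c(w):=\sup_{x\in X}\{c(x,w)-h(x)\}$, with the convention $(+\infty)+(-\infty)=(-\infty)+(+\infty)=(+\infty)-(+\infty)=(-\infty)-(-\infty)=-\infty$ (so for proper $h$, $h^c(x^*,y^*,\alpha)=h^*(x^* )$ if $\operatorname{dom}h\subseteq H^-_{y^*,\alpha}$ and $+\infty$ otherwise). Epigraphs of functions on $W$ are subsets of $W\times\mathbb{R}$. $\delta_A$ is the indicator function of $A$. For $E\subseteq W\times\mathbb{R}$ and $e\in W\times\mathbb{R}$, $E-e:=\{z-e:z\in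 E\}$. A set $C\subseteq X\times\mathbb{R}$ is e-convex if for every point $p\notin C$ there is a continuous linear functional $\ell$ on $X\times\mathbb{R}$ with $\ell(q-p)<0$ for all $q\in C$; a function is e-convex if its epigraph is e-convex. Standing assumptions: $f,g:X\to\overline{\mathbb{R}}$ proper convex with $\operatorname{dom}f\subseteq\operatorname{dom}g$, $A\subseteq X$ nonempty, convention $(+\infty)-(+\infty)=+\infty$ in $f-g$; $v(P)=\inf_{x\in X}\{f(x)-g(x)+\delta_A(x)\}$. With $\varphi(u^*,v^*,\gamma;x^*,y^*,\alpha):=g^c(u^*,v^*,\gamma)-f^c(u^*-x^*,-y^*,\alpha)-\delta_A^c(x^*,y^*,\alpha)$: $v(D^F):=\sup_{(x^*,y^*,\alpha)\in Z}\inf_{(u^*,v^*,\gamma)\in\operatorname{dom}g^c}\varphi$ and $v(\bar D^F):=\inf_{(u^*,v^*,\gamma)\in\operatorname{dom}g^c}\sup_{(x^*,y^*,\alpha)\in Z}\varphi$. Strong duality for $(P)-(D^F)$ means $v(P)=v(D^F)$ and there is $(\bar x^*,\bar y^*,\bar\alpha)\in\operatorname{dom}\delta_A^c$ with $\varphi(u^*,v^*,\gamma;\bar x^*,\bar y^*,\bar\alpha)\ge v(D^F)$ for all $(u^*,v^*,\gamma)\in\operatorname{dom}g^c$. Strong duality for $(P)-(\bar D^F)$ means $v(P)=v(\bar D^F)$ and for every $(u^*,v^*,\gamma)\in\operatorname{dom}g^c$ there is $(x^*,y^*,\alpha)\in\operatorname{dom}\delta_A^c$ with $\varphi(u^*,v^*,\gamma;x^*,y^*,\alpha)\ge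 v(\bar D^F)$. Sets: $B:=\{0\}\times\{0\}\times\mathbb{R}_{++}\times\mathbb{R}\subseteq W\times\mathbb{R}$; $\Omega:=\bigcup_{(x^*,y^*,\alpha)\in\operatorname{dom}\delta_A^c}\ \bigcap_{(u^*,v^*,\gamma)\in\operatorname{dom}g^c}\Big[\operatorname{epi}\big(f-c(\cdot,(-x^*,-y^*,\alpha))\big)^c-\big(u^*,0,0,g^c(u^*,v^*,\gamma)-\delta_A^c(x^*,y^*,\alpha)\big)\Big]$, $K:=\bigcap_{(u^*,v^*,\gamma)\in\operatorname{dom}g^c}\ \bigcup_{(x^*,y^*,\alpha)\in\operatorname{dom}\delta_A^c}\Big[\operatorname{epi}\big(f-c(\cdot,(-x^*,-y^*,\alpha))\big)^c-\big(u^*,0,0,g^c(u^*,v^*,\gamma)-\delta_A^c(x^*,y^*,\alpha)\big)\Big]$. *)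

(* Defs.v *)
From HB Require Import structures.
From mathcomp Require Import all_boot all_order all_algebra.
From mathcomp Require Import all_classical all_reals all_analysis.
Set Implicit Arguments. Unset Strict Implicit. Unset Printing Implicit Defensive.
Import Order.TTheory GRing.Theory Num.Theory.
Import numFieldTopology.Exports.
Local Open Scope classical_set_scope.
Local Open Scope ring_scope.

Section DualityDefs.
Variables (R : realType) (X : tvsType R).

(* x* belongs to the topological dual X^* : a continuous linear functional.
   (The continuous linear functionals for sigma(X,X^* ) are exactly X^*.) *)
Definition IsDual (l : X -> R) : Prop :=
  (forall (a : R) (x y : X), l (a *: x + y) = a * l x + l y) /\ continuous l.

(* Wsp := X^* x X^* x R, represented inside (X -> R) * (X -> R) * R;
   membership in Wsp is the predicate inW. *)
Definition Wsp := ((X -> R) * (X -> R) * R)%type.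
Definition inW (w : Wsp) : Prop := IsDual w.1.1 /\ IsDual w.1.2.
Definition inZ (w : Wsp) : Prop := inW w /\ 0 < w.2.

Local Open Scope ereal_scope.

Definition cpl (x : X) (w : Wsp) : \bar R :=
  if (w.1.2 x < w.2)%R then (w.1.1 x)%:E else +oo.

(* c-conjugate, with mathcomp's addition (-oo absorbing), i.e. the convention
   (+oo)+(-oo) = (+oo)-(+oo) = (-oo)-(-oo) = -oo. Only meaningful on inW. *)
Definition cconj (h : X -> \bar R) (w : Wsp) : \bar R :=
  ereal_sup [set cpl x w - h x | x in [set: X]].

Definition domW (h : Wsp -> \bar R) : set Wsp := [set w | inW w /\ h w < +oo].

Definition indicator_fun (A : set X) (x : X) : \bar R := if `[< A x >] then 0 else +oo.

Definition proper_fun (f : X -> \bar R) : Prop :=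
  (forall x, f x != -oo) /\ (exists x, f x < +oo).

Definition convex_fun (f : X -> \bar R) : Prop :=
  forall (x y : X) (r s t : R), f x <= r%:E -> f y <= s%:E ->
    (0 <= t <= 1)%R ->
    f (t *: x + (1 - t) *: y)%R <= (t * r + (1 - t) * s)%:E.

(* e-convexity of f: epi f is e-convex in X x R; continuous linear functionals
   on X x R are (x,r) |-> <x,x*> + a r with x* in X^*, a in R. *)
Definition e_convex_fun (f : X -> \bar R) : Prop :=
  forall (p : X) (rho : R), ~ (f p <= rho%:E) ->
    exists (xs : X -> R) (a : R), IsDual xs /\
      forall (x : X) (r : R), f x <= r%:E ->
        (xs (x - p) + a * (r - rho) < 0)%R.

(* f - g with the convention (+oo) - (+oo) = +oo (dual addition) *)
Definition subd (a b : \bar R) : \bar R := dual_adde a (- b).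

Section Problem.
Variables (f g : X -> \bar R) (A : set X).

Definition vP : \bar R :=
  ereal_inf [set dual_adde (subd (f x) (g x)) (indicator_fun A x) | x in [set: X]].

Definition phiF (u xw : Wsp) : \bar R :=
  cconj g u - cconj f ((fun z => u.1.1 z - xw.1.1 z)%R, (fun z => - xw.1.2 z)%R, xw.2)
  - cconj (indicator_fun A) xw.

Definition vDF : \bar R :=
  ereal_sup [set ereal_inf [set phiF u xw | u in domW (cconj g)] | xw in inZ].

Definition vDFbar : \bar R :=
  ereal_inf [set ereal_sup [set phiF u xw | xw in inZ] | u in domW (cconj g)].

Definition strong_duality_DF : Prop :=
  vP = vDF /\
  exists xb : Wsp, domW (cconj (indicator_fun A)) xb /\
    forall u, domW (cconj g) u -> vDF <= phiF u xb.

Definition strong_duality_DFbar : Prop :=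
  vP = vDFbar /\
  forall u, domW (cconj g) u ->
    exists xw : Wsp, domW (cconj (indicator_fun A)) xw /\ vDFbar <= phiF u xw.

Definition epiW (h : Wsp -> \bar R) : set (Wsp * R) :=
  [set p | inW p.1 /\ h p.1 <= p.2%:E].

Definition subWR (z e : Wsp * R) : Wsp * R :=
  (((fun t => z.1.1.1 t - e.1.1.1 t)%R, (fun t => z.1.1.2 t - e.1.1.2 t)%R, (z.1.2 - e.1.2)%R),
   (z.2 - e.2)%R).

Definition translateWR (E : set (Wsp * R)) (e : Wsp * R) : set (Wsp * R) :=
  [set subWR z e | z in E].

Definition fminc (xw : Wsp) : X -> \bar R :=
  fun z => subd (f z) (cpl z ((fun t => - xw.1.1 t)%R, (fun t => - xw.1.2 t)%R, xw.2)).

(* the point (u*, 0, 0, g^c(u*,v*,gamma) - delta_A^c(x*,y*,alpha)) of Wsp x R;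
   the last coordinate is real on dom g^c x dom delta_A^c *)
Definition shiftpt (u xw : Wsp) : Wsp * R :=
  ((u.1.1, (fun _ => 0%R), 0%R), fine (cconj g u - cconj (indicator_fun A) xw)).

Definition pieceWR (u xw : Wsp) : set (Wsp * R) :=
  translateWR (epiW (cconj (fminc xw))) (shiftpt u xw).

Definition OmegaSet : set (Wsp * R) :=
  \bigcup_(xw in domW (cconj (indicator_fun A))) \bigcap_(u in domW (cconj g)) pieceWR u xw.

Definition Kset : set (Wsp * R) :=
  \bigcap_(u in domW (cconj g)) \bigcup_(xw in domW (cconj (indicator_fun A))) pieceWR u xw.

Definition Bset : set (Wsp * R) :=
  [set p | p.1.1.1 = (fun _ => 0%R) /\ p.1.1.2 = (fun _ => 0%R) /\ (0 < p.1.2)%R].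

End Problem.
End DualityDefs.

(* Main.v *)
Require Import Defs.
From HB Require Import structures.
From mathcomp Require Import all_boot all_order all_algebra.
From mathcomp Require Import all_classical all_reals all_analysis.
From mathcomp Require Import lra.
Import Order.TTheory GRing.Theory Num.Theory.
Import numFieldTopology.Exports.
Local Open Scope classical_set_scope.
Local Open Scope ring_scope.
Local Open Scope ereal_scope.

Section S.
Variables (R : realType) (X : tvsType R) (f g : X -> \bar R) (A : set X).
Hypotheses (hf : proper_fun f) (hg : proper_fun g)
  (hfg : forall x, f x < +oo -> g x < +oo) (hA : A !=set0) (hge : e_convex_fun g).

Local Notation D := (domW (cconj g)).
Local Notation E := (domW (cconj (indicator_fun A))).
Local Notation phi := (phiF f g A).

Lemma isdual0 : IsDual (fun _ : X => 0%R).
Proof. by split; [move=> *; rewrite mulr0 addr0 | exact: cst_continuous]. Qed.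

Lemma lin0 {l : X -> R} : IsDual l -> l 0%R = 0%R.
Proof.
move=> [hl _]; have := hl 1%R 0%R 0%R; rewrite scale1r addr0 mul1r.
by move/(congr1 (fun t : R => (t - l 0)%R)) => /=; rewrite addrK subrr => <-.
Qed.

Lemma linB {l : X -> R} x y : IsDual l -> l (x - y)%R = (l x - l y)%R.
Proof.
move=> hl; have h1 := hl.1 1%R x (- y)%R; rewrite scale1r mul1r in h1.
have h2 := hl.1 (-1)%R y 0%R; rewrite addr0 scaleN1r (lin0 hl) addr0 in h2.
by rewrite h1 h2 mulN1r.
Qed.

Lemma cconj_gtNy {h : X -> \bar R} {x0} w : h x0 \is a fin_num -> -oo < cconj h w.
Proof.
move=> hx; apply: (@lt_le_trans _ _ (cpl x0 w - h x0)); last first.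
  by apply: ereal_sup_ubound; exists x0.
rewrite /cpl; case: ifP => _; rewrite -(fineK hx) //.
by rewrite -EFinB ltNyr.
Qed.

Lemma proper_fin {h : X -> \bar R} {x} : proper_fun h -> h x < +oo -> h x \is a fin_num.
Proof. by move=> [h1 _] hx; rewrite fin_numE h1 lt_eqF. Qed.


Lemma G_fin {u} : D u -> cconj g u \is a fin_num.
Proof.
move=> [_ hu]; have [x0 hx0] := hg.2.
by rewrite fin_numE (lt_eqF hu) (gt_eqF (cconj_gtNy _ (proper_fin hg hx0))).
Qed.

Lemma ind_fin a : indicator_fun A a \is a fin_num -> A a.
Proof. by rewrite /indicator_fun; case: asboolP. Qed.

Lemma Del_fin {xw} : E xw -> cconj (indicator_fun A) xw \is a fin_num.
Proof.
move=> [_ hu]; have [a ha] := hA.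
have ha' : indicator_fun A a \is a fin_num by rewrite /indicator_fun asboolT.
by rewrite fin_numE (lt_eqF hu) (gt_eqF (cconj_gtNy _ ha')).
Qed.

Lemma Fx_gtNy w : -oo < cconj f w.
Proof. have [x0 hx0] := hf.2; exact: (cconj_gtNy _ (proper_fin hf hx0)). Qed.

Lemma phi_ltey {u xw} : D u -> E xw -> phi u xw < +oo.
Proof.
move=> hu hxw; rewrite /phiF -(fineK (G_fin hu)) -(fineK (Del_fin hxw)).
have := Fx_gtNy ((fun z => u.1.1 z - xw.1.1 z)%R, (fun z => - xw.1.2 z)%R, xw.2).
case: (cconj f _) => [r _| _|] //; first by rewrite -!EFinB ltry.
Qed.


Lemma cconj_fminc (xw w : Wsp X) : w.1.2 = (fun _ => 0%R) -> (0 < w.2)%R ->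
  cconj (fminc f xw) w =
  cconj f ((fun z => w.1.1 z - xw.1.1 z)%R, (fun z => - xw.1.2 z)%R, xw.2).
Proof.
move=> hw2 hw; rewrite /cconj; congr ereal_sup; apply: eq_imagel => x _.
rewrite /fminc /cpl /subd /= hw2 hw.
case: ifP => _; case: (f x) => [r| |] //.
rewrite EFinN oppeK /dual_adde -!EFinB; congr EFin.
by rewrite opprD addrA addrAC.
Qed.


Lemma arith (F : \bar R) (gg dd s : R) :
  F <= (s + fine (gg%:E - dd%:E))%:E <-> (- s)%:E <= gg%:E - F - dd%:E.
Proof.
rewrite -EFinB /=; case: F => [r| |].
- by rewrite -!EFinB !lee_fin; split => ?; lra.
- by rewrite /= addeNy addNye leeNy_eq leye_eq.
- by rewrite /= addey // addye // leey leNye.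
Qed.

Lemma memP {u xw} {p : Wsp X * R} : Bset p -> D u -> E xw ->
  pieceWR f g A u xw p <-> (- p.2)%:E <= phi u xw.
Proof.
case: p => [[[a b] c] d]; rewrite /Bset /= => -[-> [-> hc]] hu hxw.
rewrite /pieceWR /translateWR /shiftpt /phiF.
rewrite -(fineK (G_fin hu)) -(fineK (Del_fin hxw)) /=.
set gg := fine (cconj g u); set dd := fine (cconj (indicator_fun A) xw).
apply: (iff_trans _ (arith _ gg dd d)).
split.
- case=> [[[[z1 z2] z3] z4]] [hzW hz]; rewrite /subWR /= => -[h1 h2 h3 h4].
  have e1 : z1 = u.1.1.
    apply/funext => t; have := congr1 (fun F => F t) h1 => /= /eqP.
    by rewrite subr_eq0 => /eqP.
  have e2 : z2 = (fun _ => 0%R).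
    by apply/funext => t; have := congr1 (fun F => F t) h2; rewrite /= subr0.
  rewrite subr0 in h3; subst z1 z2 z3.
  move: hz; rewrite /= cconj_fminc //= => hz.
  by rewrite -h4 subrK.
- move=> h; exists ((u.1.1, (fun _ => 0%R), c), (d + (gg - dd))%R).
    split; first by split; [exact: hu.1.1 | exact: isdual0].
    by rewrite /= cconj_fminc.
  rewrite /subWR /=; congr (_, _, _, _).
  + by apply/funext => t; rewrite subrr.
  + by apply/funext => t; rewrite subrr.
  + by rewrite subr0.
  + by rewrite addrK.
Qed.


Lemma ucons x (e : R) : g x \is a fin_num -> (0 < e)%R ->
  exists u, D u /\ cconj g u <= (u.1.1 x - fine (g x) + e)%:E.
Proof.
move=> hx he; set r := fine (g x).
have hn : ~ (g x <= (r - e)%:E).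
  by rewrite -(fineK hx) lee_fin -/r => h; lra.
have [xs [a [hxs H]]] := hge _ _ hn.
have hgx : g x <= r%:E by rewrite /r (fineK hx).
have ha : (a < 0)%R.
  have := H x r hgx; rewrite subrr (lin0 hxs) add0r => h; nra.
set k := ((- a)^-1)%R.
have hk : (0 < k)%R by rewrite /k invr_gt0 oppr_gt0.
have hak : (a * k = -1)%R.
  by rewrite /k invrN mulrN mulfV // lt_eqF.
set u : Wsp X := ((fun z => xs z * k)%R, (fun _ => 0%R), 1%R).
have hb : cconj g u <= (u.1.1 x - r + e)%:E.
  apply: ge_ereal_sup => _ [z _ <-]; rewrite /cpl /= ltr01.
  have := hg.1 z; case hz: (g z) => [q| |] // _; last by rewrite /= addeNy leNye.
  rewrite -EFinB lee_fin.
  have := H z q; rewrite hz lexx => /(_ isT); rewrite (linB _ _ hxs) => h.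
  have h2 : ((xs z - xs x + a * (q - (r - e))) * k < 0)%R by rewrite pmulr_llt0.
  have h3 : ((xs z - xs x + a * (q - (r - e))) * k =
     (xs z * k) - (xs x * k) - (q - (r - e)))%R.
    by rewrite mulrDl mulrBl (mulrC a) -mulrA hak mulrN1.
  rewrite h3 in h2; lra.
apply: (ex_intro _ u); split => //; split.
- split => /=; last exact: isdual0.
  split; first by move=> c y z; rewrite hxs.1 mulrDl mulrA.
  move=> y; apply: (@continuous_comp _ _ _ xs ( *%R^~ k)); [exact: hxs.2 | exact: mulrr_continuous].
- exact: le_lt_trans hb (ltry _).
Qed.


Lemma phi_bound x u xw : A x -> f x \is a fin_num -> cconj g u \is a fin_num ->
  phi u xw <= cconj g u - (u.1.1 x)%:E + f x.
Proof.
move=> hAx hfx hG; rewrite /phiF.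
set w := (_, _, _ : R).
have h1 : cpl x w - f x <= cconj f w by apply: ereal_sup_ubound; exists x.
have h2 : cpl x xw - indicator_fun A x <= cconj (indicator_fun A) xw.
  by apply: ereal_sup_ubound; exists x.
rewrite /indicator_fun asboolT // sube0 in h2.
rewrite -(fineK hfx) -(fineK hG) in h1 *.
case: (boolP (xw.1.2 x < xw.2)%R) => hy; last first.
  rewrite /cpl (negbTE hy) in h2.
  have -> : cconj (indicator_fun A) xw = +oo by apply/eqP; rewrite -leye_eq.
  by rewrite /= addeNy leNye.
case: (boolP (- xw.1.2 x < xw.2)%R) => hy'; last first.
  rewrite /cpl /= (negbTE hy') addye // in h1.
  have -> : cconj f w = +oo by apply/eqP; rewrite -leye_eq.
  by rewrite /= addeNy addNye leNye.
rewrite /cpl /= hy' in h1; rewrite /cpl hy in h2.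
apply: le_trans (leeB (leeB (lexx _) h1) h2) _.
by rewrite -!EFinB lee_fin; lra.
Qed.


Lemma phi_Z x u xw : A x -> f x \is a fin_num -> -oo < phi u xw -> (0 < xw.2)%R.
Proof.
move=> hAx hfx; rewrite /phiF; set w := (_, _, _ : R) => hphi.
have h1 : cpl x w - f x <= cconj f w by apply: ereal_sup_ubound; exists x.
have h2 : cpl x xw - indicator_fun A x <= cconj (indicator_fun A) xw.
  by apply: ereal_sup_ubound; exists x.
rewrite /indicator_fun asboolT // sube0 in h2.
rewrite -(fineK hfx) in h1.
case: (boolP (xw.1.2 x < xw.2)%R) => hy; last first.
  rewrite /cpl (negbTE hy) in h2.
  have hD : cconj (indicator_fun A) xw = +oo by apply/eqP; rewrite -leye_eq.
  by move: hphi; rewrite hD /= addeNy.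
case: (boolP (- xw.1.2 x < xw.2)%R) => hy'; last first.
  rewrite /cpl /= (negbTE hy') addye // in h1.
  have hF : cconj f w = +oo by apply/eqP; rewrite -leye_eq.
  by move: hphi; rewrite hF /= addeNy addNye.
lra.
Qed.

Lemma vP_ge y : (forall x, A x -> f x \is a fin_num ->
  y <= (fine (f x) - fine (g x))%:E) -> y <= vP f g A.
Proof.
move=> H; apply: le_ereal_inf_tmp => _ [x _ <-].
rewrite /indicator_fun; case: asboolP => hAx; last by case: (subd _ _) => *; rewrite /dual_adde leey.
have := hf.1 x; have := H x hAx.
case hfx: (f x) => [r| |] //; last by rewrite /subd /dual_adde leey.
move=> Hx _; have hgx : g x \is a fin_num.
  by apply: (proper_fin hg); apply: hfg; rewrite hfx ltry.
move: (Hx isT); rewrite /= -(fineK hgx) /subd -EFinN /dual_adde /= addr0.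
done.
Qed.

Lemma WD : vDFbar f g A <= vP f g A.
Proof.
apply: vP_ge => x hAx hfx.
have hgx : g x \is a fin_num.
  by apply: (proper_fin hg); apply: hfg; rewrite -(fineK hfx) ltry.
apply/lee_addgt0Pr => e he; have [u [hu hb]] := ucons x e hgx he.
apply: ge_ereal_inf; exists (ereal_sup [set phi u xw | xw in inZ (X:=X)]).
  by exists u.
apply: ge_ereal_sup => _ [xw _ <-].
apply: le_trans (phi_bound x u xw hAx hfx (G_fin hu)) _.
move: hb; rewrite -(fineK (G_fin hu)) -(fineK hfx) -!EFinB -!EFinD !lee_fin.
lra.
Qed.

Lemma KtoP (s : R) : (forall u, D u -> exists xw, E xw /\ (- s)%:E <= phi u xw) ->
  (- s)%:E <= vP f g A.
Proof.
move=> HK; apply: vP_ge => x hAx hfx.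
have hgx : g x \is a fin_num.
  by apply: (proper_fin hg); apply: hfg; rewrite -(fineK hfx) ltry.
apply/lee_addgt0Pr => e he; have [u [hu hb]] := ucons x e hgx he.
have [xw [hxw hs]] := HK u hu.
apply: le_trans hs _; apply: le_trans (phi_bound x u xw hAx hfx (G_fin hu)) _.
move: hb; rewrite -(fineK (G_fin hu)) -(fineK hfx) -!EFinB -!EFinD !lee_fin.
lra.
Qed.

Lemma minmax : vDF f g A <= vDFbar f g A.
Proof.
apply: ge_ereal_sup => _ [xw hxw <-]; apply: le_ereal_inf_tmp => _ [u hu <-].
apply: (@le_trans _ _ (phi u xw)).
  by apply: ereal_inf_lbound; exists u.
by apply: ereal_sup_ubound; exists xw.
Qed.


Lemma E0 : E ((fun _ => 0%R), (fun _ => 0%R), 1%R).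
Proof.
split; first by split; exact: isdual0.
apply: (@le_lt_trans _ _ 0); last exact: ltry.
apply: ge_ereal_sup => _ [a _ <-]; rewrite /cpl /= ltr01 /indicator_fun.
case: asboolP => _; first by rewrite sube0.
by rewrite /= addeNy leNye.
Qed.

Lemma main : strong_duality_DF f g A <->
  (strong_duality_DFbar f g A /\
    OmegaSet f g A `&` @Bset R X = Kset f g A `&` @Bset R X).
Proof.
split.
- move=> [hPD [xb [hxb Hxb]]].
  have hbar : vDFbar f g A = vDF f g A.
    apply/eqP; rewrite eq_le; apply/andP; split; last exact: minmax.
    by rewrite -hPD; exact: WD.
  split; first split.
  + by rewrite hbar.
  + by move=> u hu; exists xb; split => //; rewrite hbar; exact: Hxb.
  + apply/seteqP; split => p [hp hB]; split => //.
    * by case: hp => xw hxw hall u hu; exists xw => //; exact: hall.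
    * exists xb => // u hu; apply/(memP hB hu hxb).
      have hs : (- p.2)%:E <= vP f g A.
        apply: KtoP => u' hu'; have [xw hxw hpx] := hp u' hu'.
        by exists xw; split => //; exact/(memP hB hu' hxw).
      by apply: le_trans hs _; rewrite hPD; exact: Hxb.
- move=> [[hPb Hb] hset].
  case hv: (vP f g A) => [v| |].
  + have hx : exists x, A x /\ f x \is a fin_num.
      apply: contrapT => hn.
      have : +oo <= vP f g A.
        by apply: vP_ge => x hAx hfx; exfalso; apply: hn; exists x.
      by rewrite hv.
    have [x [hAx hfx]] := hx.
    have hgx : g x \is a fin_num.
      by apply: (proper_fin hg); apply: hfg; rewrite -(fineK hfx) ltry.
    have [u0 [hu0 _]] := ucons x 1%R hgx ltr01.
    set p : Wsp X * R := (((fun _ => 0%R), (fun _ => 0%R), 1%R), (- v)%R).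
    have hB : Bset p by rewrite /Bset /=; split; [|split] => //; exact: ltr01.
    have hK : (Kset f g A `&` @Bset R X) p.
      split => // u hu; have [xw [hxw hle]] := Hb u hu.
      exists xw => //; apply/(memP hB hu hxw).
      by rewrite /= opprK -hv hPb.
    rewrite -hset in hK; case: hK => [[xb hxb hall] _].
    have Hxb : forall u, D u -> v%:E <= phi u xb.
      by move=> u hu; have := (memP hB hu hxb).1 (hall u hu); rewrite /= opprK.
    have hZ : inZ xb.
      split; first exact: hxb.1.
      apply: (phi_Z x u0 xb hAx hfx).
      by apply: lt_le_trans (Hxb u0 hu0); exact: ltNyr.
    have hDF : vDF f g A = v%:E.
      apply/eqP; rewrite eq_le; apply/andP; split.
        by rewrite -hv hPb; exact: minmax.
      apply: (@le_trans _ _ (ereal_inf [set phi u xb | u in D])).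
        by apply: le_ereal_inf_tmp => _ [u hu <-]; exact: Hxb.
      by apply: ereal_sup_ubound; exists xb.
    split; first by rewrite hDF.
    by exists xb; split => // u hu; rewrite hDF; exact: Hxb.
  + exfalso; have [x0 hx0] := hg.2.
    have [u0 [hu0 _]] := ucons x0 1%R (proper_fin hg hx0) ltr01.
    have [xw [hxw hle]] := Hb u0 hu0.
    rewrite -hPb hv leye_eq in hle.
    by have := phi_ltey hu0 hxw; move/eqP: hle => ->; rewrite ltxx.
  + have hDF : vDF f g A = -oo.
      by apply/eqP; rewrite -leeNy_eq -hv hPb; exact: minmax.
    split; first by rewrite hDF.
    by exists ((fun _ => 0%R), (fun _ => 0%R), 1%R); split; [exact: E0 | move=> u _; rewrite hDF leNye].
Qed.

End S.

Theorem corollary5p6 (R : realType) (X : tvsType R)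
  (f g : X -> \bar R) (A : set X) :
  hausdorff_space X ->
  (exists x : X, x != 0%R) ->
  proper_fun f -> convex_fun f ->
  proper_fun g -> convex_fun g ->
  (forall x, f x < +oo -> g x < +oo) ->
  A !=set0 ->
  e_convex_fun g ->
  (strong_duality_DF f g A <->
   (strong_duality_DFbar f g A /\
    OmegaSet f g A `&` @Bset R X = Kset f g A `&` @Bset R X)).
Proof.
move=> _ _ hf _ hg _ hfg hA hge; exact: main.
Qed.
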